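(* Let $\varphi\colon G\to G$ be an endomorphism of an abelian group $G$, let $t(G)$ be the torsion subgroup of $G$, $\varphi|_{t(G)}\colon t(G)\to t(G)$ the restriction, and $S$ a finite subgroup of $G$. Then: (1) $S$ is a positive generator for $\varphi$ if and only if $\sum_{k\in\mathbb N}\varphi^kS=t(G)$; (2) $\varphi$ is positively $S$-expansive if and only if $\varphi|_{t(G)}$ is positively $S$-expansive. If moreover $\varphi$ is an automorphism, then: (3) $S$ is a generator for $\varphi$ if and only if $\sum_{k\in\mathbb Z}\varphi^kS=t(G)$; (4) $\varphi$ is $S$-expansive if and only if $\varphi|_{t(G)}$ is $S$-expansive.
   Context: $\mathbb N=\{0,1,2,\dots\}$. For an endomorphism $\varphi$ of an abelian group $G$, a finite subgroup $S\leq G$ is a positive generator (and $\varphi$ is called positively $S$-expansive) if for every finite subgroup $F\leq G$ there is $n\in\mathbb N$ with $F\subseteq\sum_{k=0}^n\varphi^kS$. For an automorphism $\varphi$, a finite subgroup $S$ is a generator (and $\varphi$ is $S$-expansive) if for every finite subgroup $F\leq G$ there is $n\in\mathbb N$ with $F\subseteq\sum_{|k|\leq n}\varphi^kS$; for negative $k$, $\varphi^k$ denotes the power of $\varphi^{-1}$. *)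

(* Defs.v *)
From HB Require Import structures.
From mathcomp Require Import all_boot all_order all_algebra.
From mathcomp Require Import boolp classical_sets cardinality.
Set Implicit Arguments. Unset Strict Implicit. Unset Printing Implicit Defensive.
Import GRing.Theory.
Local Open Scope ring_scope.
Local Open Scope classical_set_scope.

Section Defs.
Variable G : zmodType.

Definition is_subgroup (S : set G) : Prop :=
  S 0 /\ forall x y, S x -> S y -> S (x - y).
Definition finite_subgroup (S : set G) : Prop :=
  is_subgroup S /\ finite_set S.

Definition pos_partial_sum (phi : G -> G) (S : set G) (n : nat) : set G :=
  [set x | exists f : nat -> G, (forall k, (k <= n)%N -> S (f k)) /\
       x = \sum_(k < n.+1) iter k phi (f k)].

Definition pos_full_sum (phi : G -> G) (S : set G) : set G :=
  [set x | exists n, pos_partial_sum phi S n x].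

(** \sum_{|k| <= n} phi^k S, where phi^k for k < 0 is psi^(-k), psi = phi^-1 *)
Definition sym_partial_sum (phi psi : G -> G) (S : set G) (n : nat) : set G :=
  [set x | exists f g : nat -> G,
       (forall k, (k <= n)%N -> S (f k) /\ S (g k)) /\
       x = \sum_(k < n.+1) iter k phi (f k) + \sum_(k < n) iter k.+1 psi (g k)].

Definition sym_full_sum (phi psi : G -> G) (S : set G) : set G :=
  [set x | exists n, sym_partial_sum phi psi S n x].

Definition pos_generator (phi : G -> G) (S : set G) : Prop :=
  forall F : set G, finite_subgroup F ->
    exists n : nat, F `<=` pos_partial_sum phi S n.
Definition pos_expansive (phi : G -> G) (S : set G) : Prop :=
  pos_generator phi S.

Definition generator (phi psi : G -> G) (S : set G) : Prop :=
  forall F : set G, finite_subgroup F ->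
    exists n : nat, F `<=` sym_partial_sum phi psi S n.
Definition expansive (phi psi : G -> G) (S : set G) : Prop :=
  generator phi psi S.

Definition torsion : set G := [set x | exists n : nat, (0 < n)%N /\ x *+ n = 0].

End Defs.

Section TorsionType.
Variable G : zmodType.

Definition tors : Type := {x : G | torsion x}.
HB.instance Definition _ := gen_eqMixin tors.
HB.instance Definition _ := gen_choiceMixin tors.

Lemma torsion0 : torsion (0 : G).
Proof. by exists 1%N; rewrite mulr1n. Qed.

Lemma torsionN (x : G) : torsion x -> torsion (- x).
Proof. by move=> [n [n0 hx]]; exists n; split => //; rewrite mulNrn hx oppr0. Qed.

Lemma torsionD (x y : G) : torsion x -> torsion y -> torsion (x + y).
Proof.
move=> [n [n0 hx]] [m [m0 hy]]; exists (n * m)%N; split; first by rewrite muln_gt0 n0.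
by rewrite mulrnDl mulrnA hx mul0rn mulnC mulrnA hy mul0rn addr0.
Qed.

Definition tors_zero : tors := exist _ 0 torsion0.
Definition tors_opp (x : tors) : tors := exist _ (- proj1_sig x) (torsionN (proj2_sig x)).
Definition tors_add (x y : tors) : tors :=
  exist _ (proj1_sig x + proj1_sig y) (torsionD (proj2_sig x) (proj2_sig y)).

Lemma tors_eq (x y : tors) : proj1_sig x = proj1_sig y -> x = y.
Proof.
case: x => x hx; case: y => y hy /= e; subst y.
by rewrite (Prop_irrelevance hx hy).
Qed.

Lemma tors_addA : associative tors_add.
Proof. by move=> x y z; apply: tors_eq; rewrite /= addrA. Qed.
Lemma tors_addC : commutative tors_add.
Proof. by move=> x y; apply: tors_eq; rewrite /= addrC. Qed.
Lemma tors_add0 : left_id tors_zero tors_add.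
Proof. by move=> x; apply: tors_eq; rewrite /= add0r. Qed.
Lemma tors_addN : left_inverse tors_zero tors_opp tors_add.
Proof. by move=> x; apply: tors_eq; rewrite /= addNr. Qed.

HB.instance Definition _ := GRing.isZmodule.Build tors
  tors_addA tors_addC tors_add0 tors_addN.

Lemma additive_torsion (phi : {additive G -> G}) (x : G) :
  torsion x -> torsion (phi x).
Proof. by move=> [n [n0 hx]]; exists n; split => //; rewrite -raddfMn hx raddf0. Qed.

Definition tors_restr (phi : {additive G -> G}) (x : tors) : tors :=
  exist _ (phi (proj1_sig x)) (additive_torsion phi (proj2_sig x)).

Definition tors_set (S : set G) : set tors := [set x | S (proj1_sig x)].

Lemma inverse_torsion (phi : {additive G -> G}) (psi : G -> G)
  (h1 : cancel phi psi) (h2 : cancel psi phi) (x : G) :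
  torsion x -> torsion (psi x).
Proof.
move=> [n [n0 hx]]; exists n; split => //.
by apply: (can_inj h1); rewrite raddfMn h2 hx raddf0.
Qed.

Definition tors_restr_inv (phi : {additive G -> G}) (psi : G -> G)
  (h1 : cancel phi psi) (h2 : cancel psi phi) (x : tors) : tors :=
  exist _ (psi (proj1_sig x)) (inverse_torsion h1 h2 (proj2_sig x)).

End TorsionType.

(* Main.v *)
Require Import Defs.
From HB Require Import structures.
From mathcomp Require Import all_boot all_order all_algebra.
From mathcomp Require Import boolp classical_sets cardinality.
Local Open Scope classical_set_scope.

Set Implicit Arguments. Unset Strict Implicit. Unset Printing Implicit Defensive.
Import GRing.Theory.

Section Aux.
Variable G : zmodType.
Local Open Scope ring_scope.

Lemma mulrn_modn (x : G) n k : x *+ n = 0 -> x *+ k = x *+ (k %% n)%N.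
Proof.
by move=> h; rewrite {1}(divn_eq k n) mulrnDr (mulnC (k %/ n)%N) mulrnA h mul0rn add0r.
Qed.

Lemma fin_sub_torsion (F : set G) : finite_subgroup F -> forall x, F x -> torsion x.
Proof.
move=> [[F0 Fsub] /finite_seqP [s Fs]] x Fx.
have Fmul : forall k, F (x *+ k).
  elim => [|k IH]; first by rewrite mulr0n.
  rewrite mulrS; have := Fsub _ _ Fx (Fsub _ _ F0 IH).
  by rewrite sub0r opprK.
apply: contrapT => nt.
have key : forall i j, (i < j)%N -> x *+ i <> x *+ j.
  move=> i j ij e; apply: nt; exists (j - i)%N; split; first by rewrite subn_gt0.
  move: e; rewrite -{1}(subnKC (ltnW ij)) mulrnDr => /eqP.
  by rewrite eq_sym -subr_eq0 addrC addKr => /eqP.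
have inj : injective (fun k => x *+ k).
  move=> i j /= e; case: (ltngtP i j) => // ij.
    by case: (key _ _ ij e).
  by case: (key _ _ ij (esym e)).
have U : uniq [seq x *+ k | k <- iota 0 (size s).+1].
  by rewrite (map_inj_uniq inj) iota_uniq.
suff: ((size s).+1 <= size s)%N by rewrite ltnn.
rewrite -{1}(size_iota 0 (size s).+1) -(size_map (fun k => x *+ k)).
apply: (uniq_leq_size U).
move=> y /mapP [k _ ->]; have : F (x *+ k) by [].
by rewrite Fs.
Qed.

Lemma seq_bound (s : seq G) (A : nat -> set G)
  (mono : forall n m, (n <= m)%N -> A n `<=` A m) :
  (forall x, x \in s -> exists n, A n x) -> exists n, forall x, x \in s -> A n x.
Proof.
elim: s => [|a s IH] H; first by exists 0%N.
case: (H a (mem_head _ _)) => n An.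
case: IH => [x xs|m Hm]; first by apply: H; rewrite in_cons xs orbT.
exists (maxn n m) => x; rewrite in_cons => /orP [/eqP ->|xs].
  exact: (mono _ _ (leq_maxl n m)).
exact: (mono _ _ (leq_maxr n m)) (Hm _ xs).
Qed.

Lemma gen_iff (A : nat -> set G) (mono : forall n m, (n <= m)%N -> A n `<=` A m) :
  (forall F, finite_subgroup F -> exists n, F `<=` A n) <->
  (forall x, torsion x -> exists n, A n x).
Proof.
split.
- move=> H x [n [n0 hx]].
  pose F := [set y | exists k, y = x *+ k].
  have hF : finite_subgroup F.
    split; first split.
    + by exists 0%N; rewrite mulr0n.
    + move=> _ _ [i ->] [j ->]; exists (i + j * n.-1)%N.
      rewrite mulrnDr; congr (_ + _); apply/esym/eqP; rewrite -addr_eq0.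
      rewrite -mulrnDr -{2}(muln1 j) -mulnDr addnC add1n (prednK n0).
      by rewrite mulnC mulrnA hx mul0rn.
    + apply: (@sub_finite_set _ _ [set` [seq x *+ k | k <- iota 0 n]]) => //.
      move=> _ [k ->]; rewrite /= (mulrn_modn k hx); apply/mapP; exists (k %% n)%N => //.
      by rewrite mem_iota add0n ltn_mod n0.
  case: (H F hF) => m Hm; exists m; apply: Hm; exists 1%N; by rewrite mulr1n.
- move=> H F hF; case: (hF) => _ /finite_seqP [s Fs].
  have : forall x, x \in s -> exists n, A n x.
    move=> x xs; apply: H; apply: (fin_sub_torsion hF); by rewrite Fs.
  case/(seq_bound mono) => n Hn; exists n => x; rewrite Fs; exact: Hn.
Qed.

Lemma sum_ext0 (F : nat -> G) n m : (n <= m)%N -> (forall k, (n <= k)%N -> F k = 0) ->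
  \sum_(k < n) F k = \sum_(k < m) F k.
Proof.
move=> nm H; rewrite -!(big_mkord xpredT F) (@big_cat_nat _ _ _ n 0 m) //=.
rewrite [X in _ = _ + X]big_nat_cond [X in _ = _ + X]big1 ?addr0 // => i /andP [/andP [ni _] _]; exact: H.
Qed.

Lemma iter_zero (f : G -> G) : f 0 = 0 -> forall k, iter k f 0 = 0.
Proof. by move=> h; elim => [|k IH] //=; rewrite IH h. Qed.

Lemma pos_mono (phi : G -> G) (S : set G) : S 0 -> phi 0 = 0 ->
  forall n m, (n <= m)%N -> pos_partial_sum phi S n `<=` pos_partial_sum phi S m.
Proof.
move=> S0 p0 n m nm x [f [Sf ->]].
exists (fun k => if (k <= n)%N then f k else 0); split.
  by move=> k _; case: ifP => // kn; exact: Sf.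
rewrite -(@sum_ext0 (fun k => iter k phi (if (k <= n)%N then f k else 0)) n.+1 m.+1) //.
- apply: eq_bigr => [[k kn]] _ /=; rewrite ?ltnS in kn; by rewrite kn.
- by move=> k; rewrite ltnNge => /negbTE ->; rewrite iter_zero.
Qed.

Lemma sym_mono (phi psi : G -> G) (S : set G) : S 0 -> phi 0 = 0 -> psi 0 = 0 ->
  forall n m, (n <= m)%N -> sym_partial_sum phi psi S n `<=` sym_partial_sum phi psi S m.
Proof.
move=> S0 p0 q0 n m nm x [f [g [Sf ->]]].
exists (fun k => if (k <= n)%N then f k else 0).
exists (fun k => if (k < n)%N then g k else 0); split.
  move=> k _; split.
    by case: ifP => // kn; case: (Sf k kn).
  by case: ifP => // kn; case: (Sf k (ltnW kn)).
congr (_ + _).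
- rewrite -(@sum_ext0 (fun k => iter k phi (if (k <= n)%N then f k else 0)) n.+1 m.+1) //.
  + apply: eq_bigr => [[k kn]] _ /=; rewrite ?ltnS in kn; by rewrite kn.
  + by move=> k; rewrite ltnNge => /negbTE ->; rewrite iter_zero.
- rewrite -(@sum_ext0 (fun k => iter k.+1 psi (if (k < n)%N then g k else 0)) n m) //.
  + apply: eq_bigr => [[k kn]] _ /=; rewrite ?ltnS in kn; by rewrite kn.
  + by move=> k; rewrite leqNgt => /negbTE ->; rewrite iter_zero.
Qed.

Lemma torsion_sum n (F : nat -> G) : (forall k, (k < n)%N -> torsion (F k)) ->
  torsion (\sum_(k < n) F k).
Proof.
move=> H; apply: (big_ind (fun x => torsion x)).
- exact: torsion0.
- exact: torsionD.
- by move=> [k kn] _; apply: H.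
Qed.

Lemma torsion_iter (f : G -> G) : (forall x, torsion x -> torsion (f x)) ->
  forall k x, torsion x -> torsion (iter k f x).
Proof. by move=> h; elim => [|k IH] x tx //=; apply: h; apply: IH. Qed.

Lemma val_sum n (F : nat -> tors G) :
  proj1_sig (\sum_(k < n) F k) = \sum_(k < n) proj1_sig (F k).
Proof.
elim: n => [|n IH]; first by rewrite !big_ord0.
by rewrite !big_ord_recr /= -IH.
Qed.

Lemma val_add (a b : tors G) : proj1_sig (a + b) = proj1_sig a + proj1_sig b.
Proof. by []. Qed.

Lemma val_mulrn (y : tors G) n : proj1_sig (y *+ n) = proj1_sig y *+ n.
Proof. by elim: n => [|n IH] //; rewrite !mulrS /= IH. Qed.

Lemma tors_all (y : tors G) : torsion y.
Proof.
case: (y) => x [n [n0 hx]]; exists n; split => //.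
by apply: tors_eq; rewrite val_mulrn.
Qed.

Lemma val_iter (f : tors G -> tors G) (g : G -> G) :
  (forall y, proj1_sig (f y) = g (proj1_sig y)) ->
  forall k y, proj1_sig (iter k f y) = iter k g (proj1_sig y).
Proof. by move=> h; elim => [|k IH] y //=; rewrite h IH. Qed.

Definition lift (x : G) : tors G :=
  match pselect (torsion x) with left h => exist _ x h | right _ => 0 end.

Lemma lift_val x : torsion x -> proj1_sig (lift x) = x.
Proof. by rewrite /lift; case: pselect. Qed.

End Aux.

Theorem proposition2p2 (G : zmodType) (phi : {additive G -> G}) (S : set G)
  (hS : finite_subgroup S) :
  (* (1) *)
  (pos_generator phi S <-> pos_full_sum phi S = @torsion G) /\
  (* (2) *)
  (pos_expansive phi S <-> pos_expansive (tors_restr phi) (tors_set S)) /\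
  (* (3), (4): when phi is an automorphism with inverse psi *)
  (forall (psi : G -> G) (h1 : cancel phi psi) (h2 : cancel psi phi),
     (generator phi psi S <-> sym_full_sum phi psi S = @torsion G) /\
     (expansive phi psi S <->
        expansive (tors_restr phi) (tors_restr_inv h1 h2) (tors_set S))).
Proof.
have S0 : S 0%R by case: hS => [[]].
have Stors := fin_sub_torsion hS.
have phitors : forall x, torsion x -> torsion (phi x) by exact: additive_torsion.
have vphi : forall k y, proj1_sig (iter k (tors_restr phi) y) = iter k phi (proj1_sig y).
  by apply: val_iter.
split; last split.
- rewrite /pos_generator; eapply iff_trans; [exact: (gen_iff (fun n m => @pos_mono _ phi S S0 (raddf0 phi) n m)) |]; split.
  + move=> H; apply/seteqP; split; last first.
      by move=> x /H [n Hn]; exists n.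
    move=> x [n [f [Sf ->]]]; apply: (@torsion_sum _ n.+1 (fun k => iter k phi (f k))) => k kn.
    by apply: torsion_iter => //; apply: Stors; apply: Sf.
  + by move=> E x; rewrite -E => -[n Hn]; exists n.
- have tp0 : tors_restr phi 0%R = 0%R by apply: tors_eq; rewrite /= raddf0.
  rewrite /pos_expansive /pos_generator.
  eapply iff_trans; [exact: (gen_iff (fun n m => @pos_mono _ phi S S0 (raddf0 phi) n m)) |].
  eapply iff_trans; [| apply: iff_sym; exact: (gen_iff (fun n m => @pos_mono _ (tors_restr phi) (tors_set S) S0 tp0 n m))].
  split.
  + move=> H y _; case: (H _ (proj2_sig y)) => n [f [Sf e]].
    exists n; exists (fun k => lift (f k)); split.
      by move=> k kn; rewrite /tors_set /= lift_val; [exact: Sf | exact: Stors (Sf k kn)].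
    apply: tors_eq; rewrite e (val_sum _ (fun k => iter k (tors_restr phi) (lift (f k)))); apply: eq_bigr => [[k kn]] _.
    by rewrite vphi lift_val //; apply: Stors; apply: Sf.
  + move=> H x tx; case: (H (exist _ x tx) (tors_all _)) => n [f [Sf e]].
    exists n; exists (fun k => proj1_sig (f k)); split; first by [].
    have -> : x = proj1_sig (exist (@torsion G) x tx : tors G) by [].
    by rewrite e (val_sum _ (fun k => iter k (tors_restr phi) (f k))); apply: eq_bigr => k _; rewrite vphi.
- move=> psi h1 h2.
  have p0 : phi 0%R = 0%R by rewrite raddf0.
  have q0 : psi 0%R = 0%R by rewrite -{1}p0 h1.
  have psitors : forall x, torsion x -> torsion (psi x) by exact: inverse_torsion.
  have vpsi : forall k y, proj1_sig (iter k (tors_restr_inv h1 h2) y) =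
      iter k psi (proj1_sig y) by apply: val_iter.
  split.
  + rewrite /generator; eapply iff_trans; [exact: (gen_iff (fun n m => @sym_mono _ phi psi S S0 p0 q0 n m)) |]; split.
    * move=> H; apply/seteqP; split; last first.
        by move=> x /H [n Hn]; exists n.
      move=> x [n [f [g [Sf ->]]]]; apply: torsionD.
        apply: (@torsion_sum _ n.+1 (fun k => iter k phi (f k))) => k kn.
        by apply: torsion_iter => //; apply: Stors; case: (Sf k kn).
      apply: (@torsion_sum _ n (fun k => iter k.+1 psi (g k))) => k kn.
      by apply: torsion_iter => //; apply: Stors; case: (Sf k (ltnW kn)).
    * by move=> E x; rewrite -E => -[n Hn]; exists n.
  + rewrite /expansive /generator; eapply iff_trans; [exact: (gen_iff (fun n m => @sym_mono _ phi psi S S0 p0 q0 n m)) |].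
    have tp0 : tors_restr phi 0%R = 0%R by apply: tors_eq; rewrite /= raddf0.
    have tq0 : tors_restr_inv h1 h2 0%R = 0%R by apply: tors_eq; rewrite /= q0.
    eapply iff_trans; [| apply: iff_sym; exact: (gen_iff (fun n m => @sym_mono _ _ _ (tors_set S) S0 tp0 tq0 n m))].
    split.
    * move=> H y _; case: (H _ (proj2_sig y)) => n [f [g [Sf e]]].
      exists n; exists (fun k => lift (f k)); exists (fun k => lift (g k)); split.
        move=> k kn; case: (Sf k kn) => Sfk Sgk.
        rewrite /tors_set /= !lift_val //; exact: Stors.
      apply: tors_eq; rewrite e val_add (val_sum _ (fun k => iter k (tors_restr phi) (lift (f k))))
        (val_sum _ (fun k => iter k.+1 (tors_restr_inv h1 h2) (lift (g k)))); congr (_ + _)%R; apply: eq_bigr => [[k kn]] _.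
        by rewrite vphi lift_val //; apply: Stors; case: (Sf k kn).
      by rewrite vpsi lift_val //; apply: Stors; case: (Sf k (ltnW kn)).
    * move=> H x tx; case: (H (exist _ x tx) (tors_all _)) => n [f [g [Sf e]]].
      exists n; exists (fun k => proj1_sig (f k)); exists (fun k => proj1_sig (g k)).
      split; first by [].
      have -> : x = proj1_sig (exist (@torsion G) x tx : tors G) by [].
      rewrite e val_add (val_sum _ (fun k => iter k (tors_restr phi) (f k)))
        (val_sum _ (fun k => iter k.+1 (tors_restr_inv h1 h2) (g k))); congr (_ + _)%R; apply: eq_bigr => k _.
        by rewrite vphi.
      by rewrite vpsi.
Qed.
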